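(* For every $\tau\in[0,\tfrac1{3\sqrt3}]$ the function $t\mapsto e^{2t}y_\tau(t)$ is increasing on $[0,p_\tau]$; consequently $y_\tau(t)\ge\tfrac23e^{-2t}$ on $[0,p_\tau]$, and $|\dot y_\tau|<2y_\tau$ there.
   Context: $y_\tau$ solves $\ddot y=-2y(3y-2)$, $y(0)=y_{\max}$, $\dot y(0)=0$, with $y_{\max}$ the largest root of $y^3-y^2+4\tau^2$ (so $y_{\max}\ge\tfrac23$); $p_\tau$ is its half-period (the first positive time where $y_\tau$ attains its minimum; for $\tau=0$, $y_0=\operatorname{sech}^2t$ and $p_0=\infty$). *)

(* Defs.v *)
From Stdlib Require Import Reals.
From Coquelicot Require Import Coquelicot.
Open Scope R_scope.

Definition is_largest_root (tau ymax : R) : Prop :=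
  ymax ^ 3 - ymax ^ 2 + 4 * tau ^ 2 = 0 /\
  (forall r : R, r ^ 3 - r ^ 2 + 4 * tau ^ 2 = 0 -> r <= ymax).

Definition solves_ivp (tau : R) (y dy : R -> R) : Prop :=
  (forall t : R, is_derive y t (dy t)) /\
  (forall t : R, is_derive dy t (-2 * y t * (3 * y t - 2))) /\
  (exists ymax : R, is_largest_root tau ymax /\ y 0 = ymax) /\
  dy 0 = 0.

Definition attains_min_at (y : R -> R) (s : R) : Prop :=
  forall u : R, y s <= y u.

(* t lies in [0, p_tau], where p_tau is the first positive time at which y
   attains its minimum; if no such time exists (tau = 0), this is [0, +oo). *)
Definition in_half_period (y : R -> R) (t : R) : Prop :=
  0 <= t /\ (forall s : R, 0 < s < t -> ~ attains_min_at y s).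

(* Main.v *)
Require Import Defs.
From Stdlib Require Import Reals Lra Psatz.
From Coquelicot Require Import Coquelicot.
Open Scope R_scope.

Lemma mvt_le (f df : R -> R) a b :
  (forall t, is_derive f t (df t)) -> a <= b ->
  (forall c, a < c < b -> 0 <= df c) -> f a <= f b.
Proof.
  intros Hd Hab Hp. destruct (Req_dec a b) as [->|Hne]; [lra|].
  destruct (MVT_cor2 f df a b) as [c [Hc1 Hc2]]; [lra| |].
  - intros c _. apply is_derive_Reals. apply Hd.
  - assert (0 <= df c) by (apply Hp; lra). nra.
Qed.

Lemma mvt_lt (f df : R -> R) a b :
  (forall t, is_derive f t (df t)) -> a < b ->
  (forall c, a < c < b -> 0 < df c) -> f a < f b.
Proof.
  intros Hd Hab Hp.
  destruct (MVT_cor2 f df a b) as [c [Hc1 Hc2]]; [lra| |].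
  - intros c _. apply is_derive_Reals. apply Hd.
  - assert (0 < df c) by (apply Hp; lra). nra.
Qed.

Lemma der_val (f : R -> R) x l l' : is_derive f x l -> l = l' -> is_derive f x l'.
Proof. intros H <-; exact H. Qed.

Lemma zero_der_const (f : R -> R) :
  (forall t, is_derive f t 0) -> forall a b, f a = f b.
Proof.
  intros Hd a b.
  assert (K : forall a b, a < b -> f a = f b).
  { clear a b. intros a b Hab.
    destruct (MVT_cor2 f (fun _ => 0) a b) as [c [Hc1 Hc2]]; [lra| |].
    - intros c _. apply is_derive_Reals. apply Hd.
    - lra. }
  destruct (Rtotal_order a b) as [H|[H|H]]; [auto|subst; auto|symmetry; auto].
Qed.

Lemma cont_of_der (f df : R -> R) :
  (forall t, is_derive f t (df t)) -> continuity f.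
Proof.
  intros Hd t. apply derivable_continuous_pt.
  exists (df t). apply is_derive_Reals. apply Hd.
Qed.

Theorem mainTheorem9 (tau : R) (y dy : R -> R) :
  0 <= tau <= 1 / (3 * sqrt 3) ->
  solves_ivp tau y dy ->
  (forall s t : R, in_half_period y s -> in_half_period y t -> s < t ->
     exp (2 * s) * y s < exp (2 * t) * y t) /\
  (forall t : R, in_half_period y t -> 2 / 3 * exp (-2 * t) <= y t) /\
  (forall t : R, in_half_period y t -> Rabs (dy t) < 2 * y t).
Proof.
  intros [Ht0 Ht1] [Hy [Hdy [[ymax [[Hroot Hlarg] Hy0]] Hdy0]]].
  assert (Hs3 : sqrt 3 * sqrt 3 = 3) by (apply sqrt_sqrt; lra).
  assert (Hs3p : 0 < sqrt 3) by (apply sqrt_lt_R0; lra).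
  assert (Htau : tau * (3 * sqrt 3) <= 1).
  { apply Rmult_le_compat_r with (r := 3 * sqrt 3) in Ht1; [|lra].
    replace (1 / (3 * sqrt 3) * (3 * sqrt 3)) with 1 in Ht1 by (field; lra). lra. }
  assert (Htau2 : 27 * tau ^ 2 <= 1) by nra.
  assert (Hym : 2 / 3 <= ymax).
  { set (p := fun r : R => r ^ 3 - r ^ 2 + 4 * tau ^ 2).
    assert (Hc : continuity p) by (intro r; unfold p; reg).
    destruct (IVT_gen p (2/3) 2 0 Hc) as [r [Hr1 Hr2]].
    - unfold p. rewrite Rmin_left, Rmax_right; [split; nra | nra | nra].
    - rewrite Rmin_left in Hr1 by lra. rewrite Rmax_right in Hr1 by lra.
      assert (r <= ymax) by (apply Hlarg; exact Hr2). lra. }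
  set (E := fun t => dy t ^ 2 - 4 * y t ^ 2 + 4 * y t ^ 3 + 16 * tau ^ 2).
  assert (HdE : forall t, is_derive E t 0).
  { intro t. unfold E.
    apply is_derive_ext with
      (f := fun t => dy t * dy t - 4 * (y t * y t) + 4 * (y t * (y t * y t)) + 16 * tau ^ 2).
    { intro u. simpl. ring. }
    set (dd := -2 * y t * (3 * y t - 2)).
    assert (H1 := is_derive_mult dy dy t _ _ (Hdy t) (Hdy t) (fun _ _ => Rmult_comm _ _)).
    assert (H2 := is_derive_mult y y t (dy t) (dy t) (Hy t) (Hy t) (fun _ _ => Rmult_comm _ _)).
    assert (H3 := is_derive_mult y (fun u => mult (y u) (y u)) t (dy t) _ (Hy t) H2 (fun _ _ => Rmult_comm _ _)).
    assert (H4 := is_derive_scal _ t 4 _ H2).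
    assert (H5 := is_derive_scal _ t 4 _ H3).
    assert (H6 := is_derive_minus _ _ t _ _ H1 H4).
    assert (H7 := is_derive_plus _ _ t _ _ H6 H5).
    assert (H8 := is_derive_plus _ _ t _ _ H7 (is_derive_const (16 * tau ^ 2) t)).
    eapply is_derive_ext; [|apply (der_val _ _ _ 0 H8)].
    + intro u. unfold plus, minus, opp, mult, scal, zero; simpl. unfold plus, opp, mult; simpl. ring.
    + unfold plus, minus, opp, mult, scal, zero; simpl. unfold plus, opp, mult; simpl. ring.
  }
  assert (HE : forall t, E t = 0).
  { assert (E 0 = 0) as HE0.
    { unfold E. rewrite Hdy0, Hy0. lra. }
    intro t. rewrite <- HE0. apply zero_der_const. exact HdE. }
  assert (Hen : forall t, dy t ^ 2 = 4 * y t ^ 2 - 4 * y t ^ 3 - 16 * tau ^ 2).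
  { intro t. specialize (HE t). unfold E in HE. lra. }
  assert (Hpos : forall t, 0 <= t -> 0 < y t).
  { set (G := fun t => exp (6 * t) * (y t ^ 2 / (1 + y t ^ 2))).
    set (dG := fun t => exp (6 * t) * (6 * (y t ^ 2 / (1 + y t ^ 2))
                 + 2 * y t * dy t / (1 + y t ^ 2) ^ 2)).
    assert (HdG : forall t, is_derive G t (dG t)).
    { intro t. unfold G, dG.
      assert (H1 : 0 < 1 + y t ^ 2) by nra.
      auto_derive.
      - split; [exists (dy t); apply Hy|]. split; [exists (dy t); apply Hy|].
        split; auto. lra.
      - replace (Derive (fun x => y x) t) with (dy t) by (symmetry; apply is_derive_unique, Hy). field. lra. }
    assert (HG0 : 0 < G 0).
    { unfold G. rewrite Rmult_0_r, exp_0, Hy0.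
      assert (0 < 1 + ymax ^ 2) by nra.
      apply Rmult_lt_0_compat; [lra|]. apply Rdiv_lt_0_compat; nra. }
    assert (Hne : forall t, 0 <= t -> y t <> 0).
    { intros t Ht Hz. assert (HG : G 0 <= G t).
      { apply (mvt_le G dG); auto. intros c _. unfold dG.
        assert (H1 : 0 < 1 + y c ^ 2) by nra.
        assert (Hk : 0 <= 6 * y c ^ 2 * (1 + y c ^ 2) + 2 * y c * dy c).
        { specialize (Hen c).
          assert (A : (y c * dy c) ^ 2 <= (3 * y c ^ 2 * (1 + y c ^ 2)) ^ 2).
          { replace ((y c * dy c) ^ 2) with (y c ^ 2 * dy c ^ 2) by ring.
            rewrite Hen.
            assert (0 <= y c ^ 2) by nra.
            assert (0 <= y c ^2 * tau ^ 2) by nra.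
            assert (4 * (1 - y c) <= 9 * (1 + y c ^ 2) ^ 2) by nra.
            nra. }
          assert (0 <= 3 * y c ^ 2 * (1 + y c ^ 2)) by nra.
          nra. }
        replace (6 * (y c ^ 2 / (1 + y c ^ 2)) + 2 * y c * dy c / (1 + y c ^ 2) ^ 2)
          with ((6 * y c ^ 2 * (1 + y c ^ 2) + 2 * y c * dy c) / (1 + y c ^ 2) ^ 2)
          by (field; lra).
        apply Rmult_le_pos; [apply Rlt_le, exp_pos|].
        unfold Rdiv. apply Rmult_le_pos; [lra|]. apply Rlt_le, Rinv_0_lt_compat, pow_lt. lra. }
      assert (G t = 0) by (unfold G; rewrite Hz; unfold Rdiv; ring). lra. }
    intros t Ht. destruct (Rlt_le_dec 0 (y t)) as [|Hle]; auto.
    exfalso. destruct (IVT_gen y 0 t 0 (cont_of_der y dy Hy)) as [x [Hx1 Hx2]].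
    - rewrite Hy0. split.
      + apply Rle_trans with (y t); [apply Rmin_r | lra].
      + apply Rle_trans with ymax; [lra | apply Rmax_l].
    - rewrite Rmin_left in Hx1 by lra. rewrite Rmax_right in Hx1 by lra.
      apply (Hne x); [lra | auto]. }
  assert (Habs : forall t, 0 <= t -> Rabs (dy t) < 2 * y t).
  { intros t Ht. specialize (Hpos t Ht). specialize (Hen t).
    assert (0 < y t ^ 3) by (apply pow_lt; lra).
    assert (Hsq : dy t ^ 2 < (2 * y t) ^ 2) by nra.
    apply Rabs_def1.
    + destruct (Rlt_le_dec (dy t) (2 * y t)); auto. nra.
    + destruct (Rlt_le_dec (- (2 * y t)) (dy t)); auto. nra. }
  set (h := fun t => exp (2 * t) * y t).
  assert (Hdh : forall t, is_derive h t (exp (2 * t) * (2 * y t + dy t))).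
  { intro t. unfold h. auto_derive.
    - exists (dy t). apply Hy.
    - replace (Derive (fun x => y x) t) with (dy t) by (symmetry; apply is_derive_unique, Hy). ring. }
  assert (Hinc : forall s t, 0 <= s -> s < t -> h s < h t).
  { intros s t Hs Hst. apply (mvt_lt h _ s t Hdh Hst).
    intros c Hc. apply Rmult_lt_0_compat; [apply exp_pos|].
    assert (Rabs (dy c) < 2 * y c) by (apply Habs; lra).
    assert (- dy c <= Rabs (dy c)) by (rewrite <- Rabs_Ropp; apply Rle_abs). lra. }
  split; [|split].
  - intros s t [Hs _] [Ht _] Hst. apply (Hinc s t Hs Hst).
  - intros t [Ht _].
    assert (Hh : h 0 <= h t).
    { destruct (Req_dec t 0) as [->|]; [lra|]. apply Rlt_le, Hinc; lra. }
    unfold h in Hh. rewrite Rmult_0_r, exp_0, Hy0, Rmult_1_l in Hh.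
    assert (Hp : exp (-2 * t) * exp (2 * t) = 1).
    { rewrite <- exp_plus. replace (-2 * t + 2 * t) with 0 by ring. apply exp_0. }
    assert (0 < exp (-2 * t)) by apply exp_pos.
    replace (y t) with (exp (-2 * t) * (exp (2 * t) * y t))
      by (rewrite <- Rmult_assoc, Hp; ring).
    nra.
  - intros t [Ht _]. apply Habs; auto.
Qed.
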